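(* Let $f:\mathbb{R}^d\to\mathbb{R}$ be twice continuously differentiable with $\nabla f$ Lipschitz continuous with constant $\kappa_{Lg}>0$. Fix $\bm{x}_0\in\mathbb{R}^d$, $\Delta>0$, the coordinate design set $\bm{x}^0=\bm{x}_0$, $\bm{x}^i=\bm{x}_0+\Delta\bm{e}^i$, $\bm{x}^{i+d}=\bm{x}_0-\Delta\bm{e}^i$ ($i=1,\dots,d$), arbitrary reals $\bar E^0,\dots,\bar E^{2d}$, and $\bar F^i=f(\bm{x}^i)+\bar E^i$. Let $M(\bm{x}_0+\bm{s})=\beta_0+\bm{s}^\top\bm{G}+\frac12\bm{s}^\top\mathsf{H}\bm{s}$ with $\mathsf{H}$ diagonal be the quadratic model with diagonal Hessian interpolating $M(\bm{x}^i)=\bar F^i$, $i=0,\dots,2d$, and suppose $\|\mathsf{H}\|\le\kappa_{\mathsf{H}}$. Then for every $\bm{x}\in\mathcal{B}(\bm{x}_0;\Delta)$, $$|M(\bm{x})-f(\bm{x})|\le\kappa_{ef}\Delta^2+|\bar E^0|+\sum_{i=1}^{2d}|\bar E^i-\bar E^0|,$$ where $\kappa_{ef}=\kappa_{eg1}+\frac{\kappa_{Lg}+\kappa_{\mathsf{H}}}{2}$ and $\kappa_{eg1}=\frac{5\sqrt{2d}}{2}(\kappa_{Lg}+\kappa_{\mathsf{H}})$.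
   Context: $\bm{e}^i$ is the $i$-th standard unit basis vector; $\mathcal{B}(\bm{x}_0;\Delta)$ is the closed Euclidean ball of radius $\Delta$ centered at $\bm{x}_0$; $\|\mathsf{H}\|$ is the spectral norm. *)

(* Defs.v *)
From mathcomp Require Import all_boot all_order all_algebra.
From mathcomp Require Import all_classical all_reals all_analysis.
Set Implicit Arguments. Unset Strict Implicit. Unset Printing Implicit Defensive.
Import Order.TTheory GRing.Theory Num.Theory.
Import numFieldNormedType.Exports.
Local Open Scope classical_set_scope.
Local Open Scope ring_scope.

Section Defs.
Variable R : realType.

(* Euclidean norm on R^d (the library norm on matrices is the max norm) *)
Definition enorm (d : nat) (v : 'rV[R]_d) : R := Num.sqrt (\sum_i v 0 i ^+ 2).

Definition unitv (d : nat) (i : 'I_d) : 'rV[R]_d := delta_mx 0 i.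

Definition partial (d : nat) (f : 'rV[R]_d -> R) (i : 'I_d) (x : 'rV[R]_d) : R :=
  derive f x (unitv i).

Definition C2 (d : nat) (f : 'rV[R]_d -> R) : Prop :=
  [/\ continuous f,
      (forall i x, derivable f x (unitv i)),
      (forall i, continuous (partial f i)),
      (forall i j x, derivable (partial f i) x (unitv j)) &
      (forall i j, continuous (partial (partial f i) j))].

Definition grad (d : nat) (f : 'rV[R]_d -> R) (x : 'rV[R]_d) : 'rV[R]_d :=
  \row_i partial f i x.

(* spectral norm ||H|| = sup_{||s|| <= 1} ||H s|| (s as a column: (H s)^T = s H^T) *)
Definition specnorm (d : nat) (H : 'M[R]_d) : R :=
  sup [set enorm (s *m H^T) | s in [set s : 'rV[R]_d | enorm s <= 1]].

Definition quad_model (d : nat) (b0 : R) (G : 'rV[R]_d) (H : 'M[R]_d)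
    (x0 x : 'rV[R]_d) : R :=
  let s := x - x0 in b0 + \sum_i s 0 i * G 0 i + 2^-1 * (s *m H *m s^T) 0 0.

Definition kappa_eg1 (d : nat) (kLg kH : R) : R :=
  5 * Num.sqrt (2 * d%:R) / 2 * (kLg + kH).

Definition kappa_ef (d : nat) (kLg kH : R) : R :=
  kappa_eg1 d kLg kH + (kLg + kH) / 2.

End Defs.

(* Main.v *)
Require Import Defs.
From mathcomp Require Import all_boot all_order all_algebra.
From mathcomp Require Import all_classical all_reals all_analysis.
From mathcomp Require Import ring lra.
Set Implicit Arguments. Unset Strict Implicit. Unset Printing Implicit Defensive.
Import Order.TTheory GRing.Theory Num.Theory.
Import numFieldNormedType.Exports.
Local Open Scope classical_set_scope.
Local Open Scope ring_scope.

Section S.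
Variable R : realType.
Variable d : nat.
Local Notation enorm := (@enorm R d).
Lemma sumsq_ge0 (v : 'rV[R]_d) : 0 <= \sum_i v 0 i ^+ 2.
Proof. by apply: sumr_ge0 => i _; exact: sqr_ge0. Qed.

Lemma enorm_le (v : 'rV[R]_d) r : 0 <= r -> \sum_i v 0 i ^+ 2 <= r ^+ 2 -> enorm v <= r.
Proof.
move=> r0 h; rewrite /enorm -(ger0_norm r0) -sqrtr_sqr ler_sqrt //.
exact: sqr_ge0.
Qed.

Lemma sumsq_le (v : 'rV[R]_d) r : enorm v <= r -> \sum_i v 0 i ^+ 2 <= r ^+ 2.
Proof.
move=> h; have r0 : 0 <= r by apply: le_trans h; exact: sqrtr_ge0.
rewrite -(sqr_sqrtr (sumsq_ge0 v)); apply: lerXn2r => //; rewrite ?nnegrE //; exact: sqrtr_ge0.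
Qed.

Lemma sq_le_sumsq (v : 'rV[R]_d) k : v 0 k ^+ 2 <= \sum_i v 0 i ^+ 2.
Proof.
rewrite (bigD1 k) //= lerDl; apply: sumr_ge0 => i _; exact: sqr_ge0.
Qed.

Lemma coord_le (v : 'rV[R]_d) k : `|v 0 k| <= enorm v.
Proof.
rewrite -sqrtr_sqr /enorm ler_sqrt ?sumsq_ge0 //; exact: sq_le_sumsq.
Qed.

Lemma cs_sum (a : 'I_d -> R) : (\sum_i `|a i|) ^+ 2 <= d%:R * \sum_i a i ^+ 2.
Proof.
have E : \sum_(i < d) \sum_(j < d) (a i ^+ 2 + a j ^+ 2) = 2 * (d%:R * \sum_i a i ^+ 2).
  rewrite (eq_bigr (fun i => d%:R * a i ^+ 2 + \sum_j a j ^+ 2)); last first.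
    by move=> i _; rewrite big_split /= sumr_const card_ord mulr_natl.
  rewrite big_split /= sumr_const card_ord -mulr_sumr mulr_natl; ring.
have : (\sum_i `|a i|) ^+ 2 * 2 <= 2 * (d%:R * \sum_i a i ^+ 2).
  rewrite -E expr2 mulr_suml mulr_suml; apply: ler_sum => i _.
  rewrite mulr_sumr mulr_suml; apply: ler_sum => j _.
  rewrite -subr_ge0.
  have -> : (a i ^+ 2 + a j ^+ 2) - `|a i| * `|a j| * 2 = (`|a i| - `|a j|) ^+ 2.
    rewrite sqrrB -(real_normK (num_real (a i))) -(real_normK (num_real (a j))); ring.
  exact: sqr_ge0.
by rewrite mulrC ler_pM2l.
Qed.
Lemma quot_eq (f : 'rV[R]_d -> R) (e y : 'rV[R]_d) (t : R) :
  (fun h : R => h^-1 *: (((fun s : R => f (s *: e + y)) \o shift t) (h *: 1) - f (t *: e + y)))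
  = (fun h => h^-1 *: ((f \o shift (t *: e + y)) (h *: e) - f (t *: e + y))).
Proof.
apply/funext => h /=; congr (_ *: (f _ - _)).
by rewrite /shift /= scalerDl addrA [h *: 1]mulr1.
Qed.

Lemma is_derive_dir (f : 'rV[R]_d -> R) (e y : 'rV[R]_d) (t : R) :
  derivable f (t *: e + y) e ->
  is_derive t 1 (fun s : R => f (s *: e + y)) (derive f (t *: e + y) e).
Proof.
move=> H; split.
  by rewrite /derivable quot_eq.
by rewrite /derive quot_eq.
Qed.

Lemma mvt_dir (f : 'rV[R]_d -> R) (e y : 'rV[R]_d) (a : R) :
  (forall x, derivable f x e) ->
  exists c, (0 <= c <= a \/ a <= c <= 0) /\
     f (a *: e + y) - f y = a * derive f (c *: e + y) e.
Proof.
move=> D.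
set g := fun s : R => f (s *: e + y).
have dg : forall t : R, is_derive t (1:R) g (derive f (t *: e + y) e).
  by move=> t; apply: is_derive_dir.
have cg : forall a b : R, {within `[a, b], continuous g}.
  move=> a0 b0; apply: derivable_within_continuous => x _.
  by have [] := dg x.
have gy : g 0 = f y by rewrite /g scale0r add0r.
case: (lerP 0 a) => ha.
  have [c cin E] := MVT_segment ha (fun x _ => dg x) (cg 0 a).
  exists c; split; first by left; rewrite in_itv /= in cin.
  by rewrite -gy E subr0 mulrC.
have [c cin E] := MVT_segment (ltW ha) (fun x _ => dg x) (cg a 0).
exists c; split; first by right; rewrite in_itv /= in cin.
rewrite -gy; apply: (@oppr_inj _); rewrite opprB E; ring.
Qed.

Lemma axis_entry (a : R) (k i : 'I_d) : (a *: unitv R k) 0 i = a * (i == k)%:R.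
Proof. by rewrite !mxE eqxx. Qed.

Lemma qm_eq b0 (G : 'rV[R]_d) (H : 'M[R]_d) x0 x : is_diag_mx H ->
  quad_model b0 G H x0 x = b0 + \sum_i (x - x0) 0 i * G 0 i
     + 2^-1 * \sum_i H i i * (x - x0) 0 i ^+ 2.
Proof.
move/is_diag_mxP => hd; rewrite /quad_model; congr (_ + _ * _).
rewrite !mxE; apply: eq_bigr => j _; rewrite !mxE.
rewrite (bigD1 j) //= big1 ?addr0; first by rewrite !mxE expr2; ring.
by move=> k kj; rewrite hd ?mulr0.
Qed.

Lemma qm_axis b0 (G : 'rV[R]_d) (H : 'M[R]_d) x0 a k : is_diag_mx H ->
  quad_model b0 G H x0 (x0 + a *: unitv R k) = b0 + a * G 0 k + 2^-1 * (H k k * a ^+ 2).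
Proof.
move=> hH; rewrite qm_eq //.
have -> : x0 + a *: unitv R k - x0 = a *: unitv R k by rewrite addrC addKr.
rewrite (bigD1 k) //= big1; last by move=> i ik; rewrite axis_entry (negbTE ik) mulr0 mul0r.
rewrite [X in 2^-1 * X](bigD1 k) //= big1; last first.
  by move=> i ik; rewrite axis_entry (negbTE ik) mulr0 expr0n mulr0.
by rewrite !axis_entry eqxx mulr1 !addr0.
Qed.

Lemma entry_sHT (H : 'M[R]_d) (s : 'rV[R]_d) j : is_diag_mx H ->
  (s *m H^T) 0 j = s 0 j * H j j.
Proof.
move/is_diag_mxP => hd; rewrite !mxE (bigD1 j) //= big1 ?addr0 ?mxE //.
by move=> k kj; rewrite mxE hd ?mulr0 // eq_sym.
Qed.

Lemma spec_ub (H : 'M[R]_d) : is_diag_mx H ->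
  has_ubound [set enorm (s *m H^T) | s in [set s : 'rV[R]_d | enorm s <= 1]].
Proof.
move=> hH; exists (Num.sqrt (\sum_j H j j ^+ 2)) => _ [s /= hs <-].
rewrite /Defs.enorm ler_sqrt; last by apply: sumr_ge0 => j _; exact: sqr_ge0.
apply: ler_sum => j _; rewrite entry_sHT // exprMn ler_piMl ?sqr_ge0 //.
have := sumsq_le hs; rewrite expr1n; apply: le_trans; exact: sq_le_sumsq.
Qed.

Lemma spec_ge0 (H : 'M[R]_d) : is_diag_mx H -> 0 <= specnorm H.
Proof.
move=> hH; apply: (ub_le_sup (spec_ub hH)); exists 0.
  by rewrite /= /Defs.enorm big1 ?sqrtr0 // => i _; rewrite mxE expr0n.
by rewrite mul0mx /Defs.enorm big1 ?sqrtr0 // => i _; rewrite mxE expr0n.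
Qed.

Lemma diag_le_spec (H : 'M[R]_d) i : is_diag_mx H -> `|H i i| <= specnorm H.
Proof.
move=> hH; apply: (ub_le_sup (spec_ub hH)); exists (unitv R i).
  rewrite /= /Defs.enorm (bigD1 i) //= big1 ?addr0.
    by rewrite !mxE !eqxx expr1n sqrtr1.
  by move=> j ji; rewrite !mxE (negbTE ji) andbF expr0n.
rewrite /Defs.enorm (bigD1 i) //= big1 ?addr0.
  by rewrite entry_sHT // !mxE !eqxx mul1r sqrtr_sqr.
by move=> j ji; rewrite entry_sHT // !mxE (negbTE ji) andbF mul0r expr0n.
Qed.
End S.

Section S2.
Variable R : realType.
Variable d : nat.

Definition pth (s : 'rV[R]_d) (m : nat) : 'rV[R]_d := \row_i (if (i < m)%N then s 0 i else 0).

Lemma pth0 s : pth s 0 = 0.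
Proof. by apply/rowP => i; rewrite !mxE. Qed.

Lemma pthd s : pth s d = s.
Proof. by apply/rowP => i; rewrite !mxE ltn_ord. Qed.

Lemma pth_step (s x0 : 'rV[R]_d) (k : 'I_d) :
  x0 + pth s k.+1 = s 0 k *: unitv R k + (x0 + pth s k).
Proof.
apply/rowP => i; rewrite !mxE /=.
have [->|ne] := eqVneq i k; first by rewrite ltnSn ltnn mulr1 addr0 addrC.
rewrite ltnS leq_eqVlt.
have -> : (nat_of_ord i == k) = false by apply/negbTE.
by rewrite /= mulr0 add0r.
Qed.

Lemma telesc (F : nat -> R) : \sum_(k < d) (F k.+1 - F k) = F d - F 0.
Proof. by rewrite -(big_mkord xpredT (fun k => F k.+1 - F k)) telescope_sumr. Qed.


Lemma term_bound (f : 'rV[R]_d -> R) (L Dl : R) (x0 s : 'rV[R]_d) (k : 'I_d) (c c' Ep Em Gk : R) :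
  (forall x y, enorm (grad f x - grad f y) <= L * enorm (x - y)) ->
  0 < L -> 0 < Dl ->
  (forall i, `|s 0 i| <= Dl) -> \sum_i s 0 i ^+ 2 <= Dl ^+ 2 ->
  (0 <= c <= s 0 k \/ s 0 k <= c <= 0) -> 0 <= c' <= 2 * Dl ->
  2 * Dl * Gk = 2 * Dl * partial f k (c' *: unitv R k + (x0 - Dl *: unitv R k)) + Ep - Em ->
  `|s 0 k * Gk - s 0 k * partial f k (c *: unitv R k + (x0 + pth s k))|
    <= `|s 0 k| * (L * (5 / 2 * Dl)) + 2^-1 * `|Ep - Em|.
Proof.
move=> Lip L0 D0 sD sS hc hc' hG.
set eta := c' *: unitv R k + (x0 - Dl *: unitv R k).
set xi := c *: unitv R k + (x0 + pth s k).
have D0' : 2 * Dl != 0 by rewrite mulf_neq0 // gt_eqF.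
have -> : Gk = partial f k eta + (Ep - Em) / (2 * Dl).
  apply: (mulfI D0'); rewrite hG; field; exact: lt0r_neq0.
have -> : s 0 k * (partial f k eta + (Ep - Em) / (2 * Dl)) - s 0 k * partial f k xi
   = s 0 k * (partial f k eta - partial f k xi) + s 0 k * (Ep - Em) / (2 * Dl) by ring.
apply: le_trans (ler_normD _ _) _; apply: lerD.
  rewrite normrM; apply: ler_wpM2l; first exact: normr_ge0.
  have -> : partial f k eta - partial f k xi = (grad f eta - grad f xi) 0 k by rewrite !mxE.
  apply: le_trans (coord_le _ _) _; apply: le_trans (Lip _ _) _.
  apply: ler_wpM2l; first exact: ltW.
  apply: enorm_le; first by apply: mulr_ge0 => //; exact: ltW.
  apply: (@le_trans _ _ (\sum_i (s 0 i ^+ 2 + (i == k)%:R * (4 * Dl ^+ 2)))).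
    apply: ler_sum => i _; rewrite !mxE.
    have [->|ne] := eqVneq i k.
      rewrite eqxx ltnn /= !mulr1 addr0 mul1r.
      have hk := sD k; move: hk; rewrite ler_norml => /andP[h1 h2].
      move: hc' => /andP[h3 h4].
      have [h5 h6] : - Dl <= c /\ c <= Dl by case: hc => /andP[] *; split; lra.
      set v := _ - _.
      have [h7 h8] : - (2 * Dl) <= v /\ v <= 2 * Dl by rewrite /v; split; lra.
      have : 0 <= s 0 k ^+ 2 by exact: sqr_ge0.
      nra.
    rewrite andbF !mulr0 mul0r subr0 addr0 !add0r opprD addrA subrr add0r sqrrN.
    by case: ifP => _ //; rewrite expr0n /= sqr_ge0.
  rewrite big_split /= [X in _ + X](bigD1 k) //= [X in _ + (_ + X)]big1; last first.
    by move=> i /negbTE ->; rewrite mul0r.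
  rewrite eqxx mul1r addr0.
  have -> : (5 / 2 * Dl) ^+ 2 = 25 / 4 * Dl ^+ 2 by field.
  have := sqr_ge0 Dl; lra.
rewrite [X in X <= _]normrM normrM normfV (ger0_norm (x := 2 * Dl)); last by rewrite mulr_ge0 // ltW.
rewrite ler_pdivrMr ?mulr_gt0 //.
have := sD k; have := normr_ge0 (Ep - Em); nra.
Qed.
End S2.

Unset Implicit Arguments.
Theorem mainTheorem3 (R : realType) (d : nat) (f : 'rV[R]_d -> R)
    (kLg kH Delta : R) (x0 : 'rV[R]_d) (E0 : R) (Ep Em : 'I_d -> R)
    (b0 : R) (G : 'rV[R]_d) (H : 'M[R]_d) :
  C2 f ->
  0 < kLg ->
  (forall x y : 'rV[R]_d, enorm (grad f x - grad f y) <= kLg * enorm (x - y)) ->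
  0 < Delta ->
  is_diag_mx H ->
  quad_model b0 G H x0 x0 = f x0 + E0 ->
  (forall i, quad_model b0 G H x0 (x0 + Delta *: unitv R i)
             = f (x0 + Delta *: unitv R i) + Ep i) ->
  (forall i, quad_model b0 G H x0 (x0 - Delta *: unitv R i)
             = f (x0 - Delta *: unitv R i) + Em i) ->
  specnorm H <= kH ->
  forall x : 'rV[R]_d, enorm (x - x0) <= Delta ->
    `|quad_model b0 G H x0 x - f x|
      <= kappa_ef d kLg kH * Delta ^+ 2 + `|E0|
         + \sum_(i < d) (`|Ep i - E0| + `|Em i - E0|).
Proof.
move=> C2f L0 Lip D0 hH e0 ep em hkH x hx.
have [_ Dv _ _ _] := C2f.
pose s := x - x0.
have sD : forall i, `|s 0 i| <= Delta by move=> i; exact: le_trans (coord_le _ _) hx.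
have sS : \sum_i s 0 i ^+ 2 <= Delta ^+ 2 by exact: sumsq_le.
have kH0 : 0 <= kH := le_trans (spec_ge0 hH) hkH.
have hHk : forall k, `|H k k| <= kH by move=> k; exact: le_trans (diag_le_spec k hH) hkH.
have hb0 : b0 = f x0 + E0.
  rewrite -e0 qm_eq // subrr !big1 ?mulr0 ?addr0 // => i _; rewrite mxE ?mul0r ?expr0n ?mulr0 //.
have hG : forall k, exists c', 0 <= c' <= 2 * Delta /\ 2 * Delta * G 0 k
   = 2 * Delta * partial f k (c' *: unitv R k + (x0 - Delta *: unitv R k)) + Ep k - Em k.
  move=> k; have [c [hc hf]] := mvt_dir (x0 - Delta *: unitv R k) (2 * Delta) (Dv k).
  exists c; split; first by case: hc => // /andP[h1 h2]; lra.
  have E1 := ep k; rewrite qm_axis // in E1.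
  have E2 : quad_model b0 G H x0 (x0 + (- Delta) *: unitv R k)
      = f (x0 - Delta *: unitv R k) + Em k by rewrite scaleNr; exact: em k.
  rewrite qm_axis // sqrrN in E2.
  have e3 : 2 * Delta *: unitv R k + (x0 - Delta *: unitv R k) = x0 + Delta *: unitv R k.
    by apply/rowP => i; rewrite !mxE; ring.
  rewrite e3 in hf; rewrite /partial; lra.
have hfx : f x - f x0 = \sum_(k < d) (f (x0 + pth s k.+1) - f (x0 + pth s k)).
  rewrite (@telesc R d (fun m => f (x0 + pth s m))) pthd pth0 addr0.
  by have -> : x0 + s = x by rewrite /s addrC subrK.
have key : quad_model b0 G H x0 x - f x = E0
    + \sum_(k < d) (s 0 k * G 0 k - (f (x0 + pth s k.+1) - f (x0 + pth s k)))
    + 2^-1 * \sum_i H i i * s 0 i ^+ 2.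
  rewrite qm_eq // sumrB -hfx hb0 /s; ring.
have T : forall k : 'I_d, `|s 0 k * G 0 k - (f (x0 + pth s k.+1) - f (x0 + pth s k))|
    <= `|s 0 k| * (kLg * (5 / 2 * Delta)) + 2^-1 * (`|Ep k - E0| + `|Em k - E0|).
  move=> k; have [c [hc hf]] := mvt_dir (x0 + pth s k) (s 0 k) (Dv k).
  rewrite -pth_step in hf; rewrite hf.
  have [c' [hc' hg]] := hG k.
  apply: le_trans (term_bound Lip L0 D0 sD sS hc hc' hg) _.
  apply: lerD => //; apply: ler_wpM2l; first by rewrite invr_ge0.
  rewrite (_ : Ep k - Em k = (Ep k - E0) - (Em k - E0)); last by ring.
  exact: ler_normB.
have hA : `|\sum_(k < d) (s 0 k * G 0 k - (f (x0 + pth s k.+1) - f (x0 + pth s k)))|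
   <= kLg * (5 / 2 * Delta) * \sum_k `|s 0 k| + 2^-1 * \sum_(i < d) (`|Ep i - E0| + `|Em i - E0|).
  apply: le_trans (ler_norm_sum _ _ _) _.
  rewrite !mulr_sumr -big_split; apply: ler_sum => k _; by apply: le_trans (T k) _; rewrite [X in X + _ <= _]mulrC.
have hB : `|\sum_i H i i * s 0 i ^+ 2| <= kH * Delta ^+ 2.
  apply: le_trans (ler_norm_sum _ _ _) _.
  apply: (@le_trans _ _ (\sum_i kH * s 0 i ^+ 2)).
    apply: ler_sum => i _; rewrite normrM (ger0_norm (sqr_ge0 _)).
    by apply: ler_wpM2r; [exact: sqr_ge0 | exact: hHk].
  by rewrite -mulr_sumr; apply: ler_wpM2l.
have hS : \sum_k `|s 0 k| <= Num.sqrt d%:R * Delta.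
  have h0 : 0 <= \sum_k `|s 0 k| by apply: sumr_ge0 => k _; exact: normr_ge0.
  rewrite -(ger0_norm h0) -sqrtr_sqr.
  apply: (@le_trans _ _ (Num.sqrt (d%:R * Delta ^+ 2))).
    rewrite ler_sqrt; last by rewrite mulr_ge0 // sqr_ge0.
    apply: le_trans (cs_sum (fun i => s 0 i)) _.
    by apply: ler_wpM2l.
  by rewrite sqrtrM // sqrtr_sqr ger0_norm // ltW.
rewrite key.
apply: le_trans (ler_normD _ _) _.
apply: le_trans (lerD (ler_normD _ _) (lexx _)) _.
rewrite normrM ger0_norm; last by rewrite invr_ge0.
have hA' := le_trans hA (lerD (ler_wpM2l (mulr_ge0 (ltW L0) (mulr_ge0 (ltac:(lra) : (0:R) <= 5/2) (ltW D0)))  hS) (lexx _)).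
have hsum : 0 <= \sum_(i < d) (`|Ep i - E0| + `|Em i - E0|).
  by apply: sumr_ge0 => i _; apply: addr_ge0; exact: normr_ge0.
rewrite /kappa_ef /kappa_eg1 sqrtrM //.
have r1 : 1 <= Num.sqrt (2 : R) by rewrite -{1}sqrtr1 ler_sqrt ?ler1n.
have q0 : 0 <= Num.sqrt (d%:R : R) := sqrtr_ge0 _.
set q := Num.sqrt (d%:R : R) in hA' q0 *.
set r := Num.sqrt (2 : R) in r1 *.
have f1 : 0 <= (r - 1) * (q * kLg * Delta ^+ 2).
  by apply: mulr_ge0; [lra | apply: mulr_ge0; [apply: mulr_ge0 => //; exact: ltW | exact: sqr_ge0]].
have f2 : 0 <= r * q * kH * Delta ^+ 2.
  by apply: mulr_ge0; [apply: mulr_ge0 => //; apply: mulr_ge0 => //; lra | exact: sqr_ge0].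
have f3 : 0 <= kLg * Delta ^+ 2 by apply: mulr_ge0; [exact: ltW | exact: sqr_ge0].
have f4 := hB.
nra.
Qed.
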